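(* Let $K\ge2$, $\varepsilon\in(0,1]$ and $T\ge 3K/32$. In prediction with limited advice with one additional observation per round, for every (possibly randomized) learning algorithm there exists an oblivious loss sequence with losses in $[0,1]$ and effective loss range at most $\varepsilon$ such that the expected regret satisfies $\mathcal{R}_T\ge 0.02\,\varepsilon\sqrt{KT}$; that is, $\inf\sup\mathcal R_T\ge 0.02\varepsilon\sqrt{KT}$, with the infimum over algorithms and the supremum over such oblivious loss sequences.
   Context: Setting: there are $K$ arms, $[K]=\{1,\dots,K\}$, and losses $\ell_t^a\in[0,1]$. In each round $t$ the learner picks a primary arm $A_t\in[K]$, suffers and observes $\ell_t^{A_t}$, and additionally picks a secondary arm $B_t$ and observes, but does not suffer, $\ell_t^{B_t}$; choices may depend on all past observations and internal randomization. An oblivious adversary fixes all losses before the game starts. The effective loss range is the smallest $\varepsilon$ such that $|\ell_t^a-\ell_t^{a'}|\le\varepsilon$ for all $t\le T$ and $a,a'\in[K]$. The expected regret is $\mathcal{R}_T=\mathbb{E}[\sum_{t=1}^T\ell_t^{A_t}]-\min_{a\in[K]}\mathbb{E}[\sum_{t=1}^T\ell_t^a]$. *)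

(* Defs.v *)
From Stdlib Require Import Reals List.
Import ListNotations.
Open Scope R_scope.

(* Arms are the naturals 0 .. K-1 (i.e. [K] shifted by one);
   rounds are t = 0 .. T-1.  A loss sequence is L t a = loss of arm a at round t. *)

Fixpoint sumR (n : nat) (f : nat -> R) : R :=
  match n with
  | O => 0
  | S m => sumR m f + f m
  end.

(* minR n f = min (f 0, ..., f n)  (n+1 values) *)
Fixpoint minR (n : nat) (f : nat -> R) : R :=
  match n with
  | O => f O
  | S m => Rmin (minR m f) (f (S m))
  end.

(* One round's observation: (A_t, loss of A_t, B_t, loss of B_t). *)
Definition obs : Type := (nat * R * nat * R)%type.
Definition history : Type := list obs.

(* A (possibly randomized) learning algorithm, as a behavioural strategy:
   - prim h a   : probability of choosing primary arm a given past observations h;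
   - sec h a l b: probability of choosing secondary arm b given past observations h,
                  the primary arm a of the current round and its observed loss l. *)
Record algorithm : Type := {
  prim : history -> nat -> R;
  sec  : history -> nat -> R -> nat -> R
}.

Definition valid_algorithm (K : nat) (alg : algorithm) : Prop :=
  (forall h a, (a < K)%nat -> 0 <= prim alg h a) /\
  (forall h, sumR K (prim alg h) = 1) /\
  (forall h a l b, (b < K)%nat -> 0 <= sec alg h a l b) /\
  (forall h a l, sumR K (sec alg h a l) = 1).

Fixpoint exp_loss_from (K : nat) (alg : algorithm) (L : nat -> nat -> R)
         (n t : nat) (h : history) : R :=
  match n with
  | O => 0
  | S m =>
      sumR K (fun a =>
        prim alg h a *
        (L t a +
         sumR K (fun b =>
           sec alg h a (L t a) b *
           exp_loss_from K alg L m (S t) (h ++ [(a, L t a, b, L t b)]))))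
  end.

Definition exp_loss (K T : nat) (alg : algorithm) (L : nat -> nat -> R) : R :=
  exp_loss_from K alg L T 0 [].

Definition cum_loss (T : nat) (L : nat -> nat -> R) (a : nat) : R :=
  sumR T (fun t => L t a).

Definition regret (K T : nat) (alg : algorithm) (L : nat -> nat -> R) : R :=
  exp_loss K T alg L - minR (K - 1) (cum_loss T L).

Definition losses_in_01 (K T : nat) (L : nat -> nat -> R) : Prop :=
  forall t a, (t < T)%nat -> (a < K)%nat -> 0 <= L t a <= 1.

Definition eff_range_le (K T : nat) (L : nat -> nat -> R) (eps : R) : Prop :=
  forall t a a', (t < T)%nat -> (a < K)%nat -> (a' < K)%nat ->
    Rabs (L t a - L t a') <= eps.

(* Main.v *)
Require Import Defs.
From Stdlib Require Import Reals List Lra Lia Psatz Bool.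
Import ListNotations.
Open Scope R_scope.

Lemma sumR_ext n f g : (forall i, (i < n)%nat -> f i = g i) -> sumR n f = sumR n g.
Proof. induction n; simpl; intros H; auto. rewrite IHn by (intros; apply H; lia). rewrite H by lia. auto. Qed.

Lemma sumR_plus n f g : sumR n (fun i => f i + g i) = sumR n f + sumR n g.
Proof. induction n; simpl; [lra|]. rewrite IHn; lra. Qed.

Lemma sumR_scal n c f : sumR n (fun i => c * f i) = c * sumR n f.
Proof. induction n; simpl; [lra|]. rewrite IHn; lra. Qed.

Lemma sumR_le n f g : (forall i, (i < n)%nat -> f i <= g i) -> sumR n f <= sumR n g.
Proof. induction n; simpl; intros H; [lra|]. pose proof (H n ltac:(lia)). pose proof (IHn ltac:(intros; apply H; lia)). lra. Qed.

Lemma sumR_const n c : sumR n (fun _ => c) = INR n * c.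
Proof. induction n. simpl; lra. rewrite S_INR. simpl. rewrite IHn. lra. Qed.

Lemma sumR_swap n m f : sumR n (fun i => sumR m (fun j => f i j)) = sumR m (fun j => sumR n (fun i => f i j)).
Proof. induction n; simpl.
 - rewrite sumR_const. lra.
 - rewrite IHn. rewrite <- sumR_plus. auto. Qed.

Lemma sumR_indic n j c : (j < n)%nat -> sumR n (fun i => if Nat.eqb i j then c else 0) = c.
Proof. induction n; simpl; intros H; [lia|].
 destruct (Nat.eqb_spec n j).
 - subst. rewrite (sumR_ext _ _ (fun _ => 0)). rewrite sumR_const. lra.
   intros i Hi. destruct (Nat.eqb_spec i j); [lia|auto].
 - rewrite IHn by lia. lra. Qed.

Lemma sumR_CS n f : (sumR n f)^2 <= INR n * sumR n (fun i => (f i)^2).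
Proof. induction n. simpl; lra. rewrite S_INR. cbn [sumR].
 destruct n.
 - simpl. lra.
 - set (S0 := sumR (S n) f) in *. set (Q := sumR (S n) (fun i => f i ^2)) in *.
   set (y := f (S n)). set (k := INR (S n)) in *.
   assert (Hk: 0 < k) by (unfold k; apply lt_0_INR; lia).
   assert (2*S0*y <= S0^2/k + k*y^2).
   { assert (0 <= (S0/k - y)^2 * k) by (apply Rmult_le_pos; [apply pow2_ge_0|lra]).
     replace ((S0/k-y)^2*k) with (S0^2/k - 2*S0*y + k*y^2) in H by (field; lra). lra. }
   assert (S0^2/k <= Q). { apply Rmult_le_reg_r with k; auto. replace (S0^2/k*k) with (S0^2) by (field; lra). lra. }
   nra. Qed.

Lemma sumR_nonneg n f : (forall i, (i<n)%nat -> 0 <= f i) -> 0 <= sumR n f.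
Proof. intros H. rewrite <- (Rmult_0_r (INR n)). rewrite <- sumR_const. apply sumR_le. auto. Qed.

Definition bsum (g : bool -> R) : R := g true + g false.

Lemma sumR_bsum n g : sumR n (fun i => bsum (g i)) = bsum (fun z => sumR n (fun i => g i z)).
Proof. unfold bsum. apply sumR_plus. Qed.

Lemma minR_le n f i : (i <= n)%nat -> minR n f <= f i.
Proof. induction n; simpl; intros H.
 - replace i with 0%nat by lia. lra.
 - destruct (Nat.eq_dec i (S n)). subst. apply Rmin_r.
   eapply Rle_trans. apply Rmin_l. apply IHn. lia. Qed.

From Stdlib Require Import Classical.

Lemma bsum_scal c g : bsum (fun z => c * g z) = c * bsum g.
Proof. unfold bsum; ring. Qed.
Lemma bsum_plus f g : bsum (fun z => f z + g z) = bsum f + bsum g.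
Proof. unfold bsum; ring. Qed.
Lemma bsum_ext f g : (forall z, f z = g z) -> bsum f = bsum g.
Proof. unfold bsum; intros H; rewrite !H; auto. Qed.
Lemma bsum_le f g : (forall z, f z <= g z) -> bsum f <= bsum g.
Proof. unfold bsum; intros H; pose proof (H true); pose proof (H false); lra. Qed.

Section Main.
Variable K : nat.
Variable alg : algorithm.
Variables eps gam : R.
Hypothesis Hval : valid_algorithm K alg.
Hypothesis Hgam : 0 <= gam < 1.
Hypothesis Heps : 0 < eps.

Definition env := option nat.
Definition qb (e : env) (a : nat) (z : bool) : R :=
  match e with
  | Some j => if Nat.eqb a j then (if z then (1-gam)/2 else (1+gam)/2) else /2
  | None => /2
  end.
Definition val (z : bool) : R := if z then eps else 0.
Definition mm (e : env) a b (z z' : bool) : R :=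
  if Nat.eqb a b then (if Bool.eqb z z' then qb e a z else 0) else qb e a z * qb e b z'.
Definition pp (h : history) a := Rmax 0 (prim alg h a).
Definition ps (h : history) a l b := Rmax 0 (sec alg h a l b).
Definition w e h a b z z' := pp h a * ps h a (val z) b * mm e a b z z'.
Definition obsv a b z z' : obs := (a, val z, b, val z').
Definition SS (F : nat -> nat -> bool -> bool -> R) : R :=
  sumR K (fun a => sumR K (fun b => bsum (fun z => bsum (fun z' => F a b z z')))).
Definition StepAvg e h F := SS (fun a b z z' => w e h a b z z' * F a b z z').
Fixpoint Ex (e : env) (r : nat -> nat -> bool -> bool -> R) (n : nat) (h : history) : R :=
  match n with
  | O => 0
  | S m => StepAvg e h (fun a b z z' => r a b z z' + Ex e r m (h ++ [obsv a b z z']))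
  end.

Lemma qb_nonneg e a z : 0 <= qb e a z.
Proof. unfold qb; destruct e; [destruct (Nat.eqb a n); [destruct z|]|]; lra. Qed.
Lemma qb_sum e a : qb e a true + qb e a false = 1.
Proof. unfold qb; destruct e; [destruct (Nat.eqb a n)|]; lra. Qed.
Lemma mm_nonneg e a b z z' : 0 <= mm e a b z z'.
Proof. unfold mm. destruct (Nat.eqb a b); [destruct (Bool.eqb z z'); [apply qb_nonneg|lra]|].
 apply Rmult_le_pos; apply qb_nonneg. Qed.
Lemma mm_sum e a b z : bsum (fun z' => mm e a b z z') = qb e a z.
Proof. unfold bsum, mm. destruct (Nat.eqb a b). destruct z; simpl; lra.
 rewrite <- Rmult_plus_distr_l, qb_sum. lra. Qed.
Lemma pp_nonneg h a : 0 <= pp h a.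
Proof. apply Rmax_l. Qed.
Lemma ps_nonneg h a l b : 0 <= ps h a l b.
Proof. apply Rmax_l. Qed.
Lemma pp_sum h : sumR K (pp h) = 1.
Proof. destruct Hval as [H1 [H2 _]]. rewrite <- (H2 h). apply sumR_ext. intros. unfold pp.
 apply Rmax_right. auto. Qed.
Lemma ps_sum h a l : sumR K (ps h a l) = 1.
Proof. destruct Hval as [_ [_ [H3 H4]]]. rewrite <- (H4 h a l). apply sumR_ext. intros. unfold ps.
 apply Rmax_right. auto. Qed.
Lemma pp_eq h a : (a < K)%nat -> pp h a = prim alg h a.
Proof. destruct Hval as [H1 _]. intros; unfold pp; apply Rmax_right; auto. Qed.
Lemma ps_eq h a l b : (b < K)%nat -> ps h a l b = sec alg h a l b.
Proof. destruct Hval as [_ [_ [H3 _]]]. intros; unfold ps; apply Rmax_right; auto. Qed.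
Lemma w_nonneg e h a b z z' : 0 <= w e h a b z z'.
Proof. unfold w. repeat apply Rmult_le_pos; auto using pp_nonneg, ps_nonneg, mm_nonneg. Qed.

Lemma SS_plus F G : SS (fun a b z z' => F a b z z' + G a b z z') = SS F + SS G.
Proof. unfold SS. rewrite <- sumR_plus. apply sumR_ext; intros. rewrite <- sumR_plus. apply sumR_ext; intros.
 rewrite <- bsum_plus. apply bsum_ext; intros. apply bsum_plus. Qed.
Lemma SS_scal c F : SS (fun a b z z' => c * F a b z z') = c * SS F.
Proof. unfold SS. rewrite <- sumR_scal. apply sumR_ext; intros. rewrite <- sumR_scal. apply sumR_ext; intros.
 rewrite <- bsum_scal. apply bsum_ext; intros. apply bsum_scal. Qed.
Lemma SS_le F G : (forall a b z z', (a < K)%nat -> (b < K)%nat -> F a b z z' <= G a b z z') -> SS F <= SS G.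
Proof. intros H. unfold SS. apply sumR_le; intros. apply sumR_le; intros. apply bsum_le; intros. apply bsum_le; intros. auto. Qed.
Lemma SS_ext F G : (forall a b z z', (a < K)%nat -> (b < K)%nat -> F a b z z' = G a b z z') -> SS F = SS G.
Proof. intros H. apply Rle_antisym; apply SS_le; intros; rewrite H; auto; lra. Qed.

Lemma StepAvg_plus e h F G : StepAvg e h (fun a b z z' => F a b z z' + G a b z z') = StepAvg e h F + StepAvg e h G.
Proof. unfold StepAvg. rewrite <- SS_plus. apply SS_ext; intros; ring. Qed.
Lemma StepAvg_scal e h c F : StepAvg e h (fun a b z z' => c * F a b z z') = c * StepAvg e h F.
Proof. unfold StepAvg. rewrite <- SS_scal. apply SS_ext; intros; ring. Qed.
Lemma StepAvg_le e h F G : (forall a b z z', (a < K)%nat -> (b < K)%nat -> F a b z z' <= G a b z z') -> StepAvg e h F <= StepAvg e h G.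
Proof. intros H. unfold StepAvg. apply SS_le; intros. apply Rmult_le_compat_l; auto using w_nonneg. Qed.
Lemma StepAvg_ext e h F G : (forall a b z z', (a < K)%nat -> (b < K)%nat -> F a b z z' = G a b z z') -> StepAvg e h F = StepAvg e h G.
Proof. intros H. apply Rle_antisym; apply StepAvg_le; intros; rewrite H; auto; lra. Qed.

Lemma StepAvg_az e h (phi : nat -> bool -> R) :
  StepAvg e h (fun a b z z' => phi a z) = sumR K (fun a => pp h a * bsum (fun z => qb e a z * phi a z)).
Proof. unfold StepAvg, SS, w. apply sumR_ext; intros a Ha.
 transitivity (sumR K (fun b => bsum (fun z => (pp h a * qb e a z * phi a z) * ps h a (val z) b))).
 - apply sumR_ext; intros b Hb. apply bsum_ext; intros z.
   rewrite <- (mm_sum e a b z). unfold bsum. ring.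
 - rewrite sumR_bsum. rewrite <- bsum_scal. apply bsum_ext; intros z.
   rewrite sumR_scal, ps_sum. ring. Qed.

Lemma StepAvg_const e h c : StepAvg e h (fun _ _ _ _ => c) = c.
Proof. rewrite (StepAvg_az e h (fun _ _ => c)).
 rewrite (sumR_ext _ _ (fun a => c * pp h a)). rewrite sumR_scal, pp_sum; ring.
 intros. unfold bsum. replace (qb e i true * c + qb e i false * c) with ((qb e i true + qb e i false)*c) by ring. rewrite qb_sum. ring. Qed.


Definition upd (r : nat -> bool) c z := fun i => if Nat.eqb i c then z else r i.
Fixpoint RowAvg (e : env) (k : nat) (G : (nat -> bool) -> R) : R :=
  match k with
  | O => G (fun _ => false)
  | S k' => bsum (fun z => qb e k' z * RowAvg e k' (fun r => G (upd r k' z)))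
  end.

Lemma RowAvg_ext e k G G' : (forall r, G r = G' r) -> RowAvg e k G = RowAvg e k G'.
Proof. revert G G'; induction k; simpl; intros G G' H; auto.
 apply bsum_ext; intros z. f_equal. apply IHk. intros; apply H. Qed.
Lemma RowAvg_plus e k G G' : RowAvg e k (fun r => G r + G' r) = RowAvg e k G + RowAvg e k G'.
Proof. revert G G'; induction k; simpl; intros G G'; auto.
 rewrite <- bsum_plus. apply bsum_ext; intros z. rewrite (IHk (fun r => G (upd r k z)) (fun r => G' (upd r k z))). ring. Qed.
Lemma RowAvg_scal e k c G : RowAvg e k (fun r => c * G r) = c * RowAvg e k G.
Proof. revert G; induction k; simpl; intros G; auto.
 rewrite <- bsum_scal. apply bsum_ext; intros z. rewrite (IHk (fun r => G (upd r k z))). ring. Qed.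
Lemma RowAvg_const e k c : RowAvg e k (fun _ => c) = c.
Proof. induction k; simpl; auto. unfold bsum. rewrite IHk. rewrite <- Rmult_plus_distr_r, qb_sum. ring. Qed.
Lemma RowAvg_le e k G G' : (forall r, G r <= G' r) -> RowAvg e k G <= RowAvg e k G'.
Proof. revert G G'; induction k; simpl; intros G G' H; auto.
 apply bsum_le; intros z. apply Rmult_le_compat_l. apply qb_nonneg. apply IHk. intros; apply H. Qed.
Lemma RowAvg_sum e k n F : RowAvg e k (fun r => sumR n (fun i => F i r)) = sumR n (fun i => RowAvg e k (F i)).
Proof. induction n; simpl. apply RowAvg_const. rewrite RowAvg_plus, IHn. auto. Qed.

Lemma RowAvg_marg e k g a b : (a < k)%nat -> (b < k)%nat ->
  RowAvg e k (fun r => g (r a) (r b)) = bsum (fun z => bsum (fun z' => mm e a b z z' * g z z')).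
Proof. revert g a b; induction k; intros g a b Ha Hb; [lia|]. simpl. unfold upd.
 destruct (Nat.eqb_spec a k); destruct (Nat.eqb_spec b k).
 - subst. rewrite (bsum_ext _ (fun z => qb e k z * g z z)).
   + unfold bsum, mm. rewrite Nat.eqb_refl. simpl. ring.
   + intros z. rewrite RowAvg_const. auto.
 - subst. rewrite (bsum_ext _ (fun z => qb e k z * bsum (fun y => qb e b y * g z y))).
   + unfold bsum, mm. assert (Nat.eqb k b = false) by (apply Nat.eqb_neq; lia). rewrite H. ring.
   + intros z. f_equal. rewrite (IHk (fun _ y => g z y) b b) by lia.
     unfold bsum, mm. rewrite Nat.eqb_refl. simpl. ring.
 - subst. rewrite (bsum_ext _ (fun z => qb e k z * bsum (fun y => qb e a y * g y z))).
   + unfold bsum, mm. assert (Nat.eqb a k = false) by (apply Nat.eqb_neq; lia). rewrite H. ring.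
   + intros z. f_equal. rewrite (IHk (fun y _ => g y z) a a) by lia.
     unfold bsum, mm. rewrite Nat.eqb_refl. simpl. ring.
 - rewrite (bsum_ext _ (fun z => qb e k z * bsum (fun z0 => bsum (fun z' => mm e a b z0 z' * g z0 z')))).
   + unfold bsum at 1. rewrite <- Rmult_plus_distr_r, qb_sum. ring.
   + intros z. f_equal. rewrite <- IHk by lia. apply RowAvg_ext. intros r. reflexivity. Qed.

Definition setrow (L : nat -> nat -> R) t (r : nat -> bool) : nat -> nat -> R :=
  fun s a => if Nat.eqb s t then val (r a) else L s a.
Fixpoint AvgL (e : env) (n t : nat) (F : (nat -> nat -> R) -> R) (L : nat -> nat -> R) : R :=
  match n with
  | O => F L
  | S n' => RowAvg e K (fun r => AvgL e n' (S t) F (setrow L t r))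
  end.

Lemma AvgL_agree e n t F G L : (forall L', (forall s a, (s < t)%nat -> L' s a = L s a) -> F L' = G L') ->
  AvgL e n t F L = AvgL e n t G L.
Proof. revert t L; induction n; simpl; intros t L H.
 - apply H. auto.
 - apply RowAvg_ext. intros r. apply IHn. intros L' HL'. apply H. intros s a Hs.
   rewrite HL' by lia. unfold setrow. destruct (Nat.eqb_spec s t); [lia|auto]. Qed.
Lemma AvgL_plus e n t F G L : AvgL e n t (fun L => F L + G L) L = AvgL e n t F L + AvgL e n t G L.
Proof. revert t L; induction n; simpl; intros; auto. rewrite <- RowAvg_plus. apply RowAvg_ext; intros; apply IHn. Qed.
Lemma AvgL_scal e n t c F L : AvgL e n t (fun L => c * F L) L = c * AvgL e n t F L.
Proof. revert t L; induction n; simpl; intros; auto. rewrite <- RowAvg_scal. apply RowAvg_ext; intros; apply IHn. Qed.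
Lemma AvgL_const e n t c L : AvgL e n t (fun _ => c) L = c.
Proof. revert t L; induction n; simpl; intros; auto. rewrite (RowAvg_ext _ _ _ (fun _ => c)). apply RowAvg_const. intros; apply IHn. Qed.
Lemma AvgL_sum e n t m F L : AvgL e n t (fun L => sumR m (fun i => F i L)) L = sumR m (fun i => AvgL e n t (F i) L).
Proof. induction m; simpl. apply AvgL_const. rewrite AvgL_plus, IHm. auto. Qed.
Definition Good (L : nat -> nat -> R) := forall s a, L s a = 0 \/ L s a = eps.
Lemma AvgL_le e n t F G L : Good L -> (forall L', Good L' -> F L' <= G L') -> AvgL e n t F L <= AvgL e n t G L.
Proof. revert t L; induction n; simpl; intros t L HL H; auto.
 apply RowAvg_le; intros r. apply IHn; auto. intros s a. unfold setrow. destruct (Nat.eqb s t); auto.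
 unfold val; destruct (r a); auto. Qed.

Definition rloss (a b : nat) (z z' : bool) : R := val z.

Lemma AvgL_exp_loss e n t h L :
  AvgL e n t (fun L' => exp_loss_from K alg L' n t h) L = Ex e rloss n h.
Proof. revert t h L; induction n; intros t h L; simpl. auto.
 rewrite (RowAvg_ext _ _ _ (fun r => sumR K (fun a => prim alg h a * sumR K (fun b =>
     sec alg h a (val (r a)) b * (val (r a) + Ex e rloss n (h ++ [obsv a b (r a) (r b)])))))).
 - rewrite RowAvg_sum. unfold StepAvg, SS. apply sumR_ext; intros a Ha.
   rewrite RowAvg_scal, RowAvg_sum. rewrite <- sumR_scal. apply sumR_ext; intros b Hb.
   rewrite (RowAvg_marg e K (fun z z' => sec alg h a (val z) b * (val z + Ex e rloss n (h ++ [obsv a b z z'])))) by auto.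
   rewrite <- bsum_scal. apply bsum_ext; intros z. rewrite <- bsum_scal. apply bsum_ext; intros z'.
   unfold w, rloss. rewrite pp_eq, ps_eq by auto. ring.
 - intros r.
   rewrite (AvgL_agree e n (S t) _ (fun L' => sumR K (fun a => prim alg h a * sumR K (fun b =>
     sec alg h a (val (r a)) b * (val (r a) + exp_loss_from K alg L' n (S t) (h ++ [obsv a b (r a) (r b)])))))).
   + rewrite AvgL_sum. apply sumR_ext; intros a Ha. rewrite AvgL_scal, AvgL_sum. f_equal.
     apply sumR_ext; intros b Hb. rewrite AvgL_scal, AvgL_plus, AvgL_const, IHn. auto.
   + intros L' HL'. assert (Ht: forall a, L' t a = val (r a)).
     { intros a. rewrite HL' by lia. unfold setrow. rewrite Nat.eqb_refl. auto. }
     apply sumR_ext; intros a Ha. rewrite !Ht. f_equal.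
     destruct Hval as [_ [_ [_ H4]]].
     rewrite (sumR_ext K (fun b => sec alg h a (val (r a)) b * (val (r a) +
        exp_loss_from K alg L' n (S t) (h ++ [obsv a b (r a) (r b)]))) (fun b => val (r a) * sec alg h a (val (r a)) b + sec alg h a (val (r a)) b *
        exp_loss_from K alg L' n (S t) (h ++ [obsv a b (r a) (r b)]))).
     * rewrite sumR_plus, sumR_scal, H4. f_equal. ring. apply sumR_ext; intros b Hb. rewrite Ht. auto.
     * intros b Hb. ring. Qed.

Lemma AvgL_cum e n t L s a : (t <= s)%nat -> (s < t + n)%nat -> (a < K)%nat ->
  AvgL e n t (fun L' => L' s a) L = qb e a true * eps.
Proof. revert t L; induction n; intros t L H1 H2 Ha; [lia|]. simpl.
 destruct (Nat.eq_dec s t).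
 - subst. rewrite (RowAvg_ext _ _ _ (fun r => val (r a) )).
   + rewrite (RowAvg_marg e K (fun z _ => val z) a a) by auto. unfold bsum, mm, val. rewrite Nat.eqb_refl. simpl. ring.
   + intros r. rewrite (AvgL_agree _ _ _ _ (fun _ => val (r a))). apply AvgL_const.
     intros L' HL'. rewrite HL' by lia. unfold setrow. rewrite Nat.eqb_refl. auto.
 - rewrite (RowAvg_ext _ _ _ (fun r => qb e a true * eps)). apply RowAvg_const.
   intros r. apply IHn; lia. Qed.

Definition rind (j : nat) (a b : nat) (z z' : bool) : R := if Nat.eqb a j then 1 else 0.

Lemma StepAvg_rloss j h : StepAvg (Some j) h rloss = eps/2 - (eps*gam/2) * StepAvg (Some j) h (rind j).
Proof. unfold rloss, rind.
 rewrite (StepAvg_az (Some j) h (fun a z => val z)).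
 rewrite (StepAvg_az (Some j) h (fun a z => if Nat.eqb a j then 1 else 0)).
 rewrite <- sumR_scal. rewrite (sumR_ext K _ (fun a => (eps/2) * pp h a + (- (eps*gam/2)) * (pp h a * bsum (fun z => qb (Some j) a z * (if Nat.eqb a j then 1 else 0))))).
 - rewrite sumR_plus, !sumR_scal, pp_sum. ring.
 - intros a Ha. unfold bsum, qb, val. destruct (Nat.eqb a j); simpl; field. Qed.

Lemma Ex_loss j n h : Ex (Some j) rloss n h = INR n * (eps/2) - (eps*gam/2) * Ex (Some j) (rind j) n h.
Proof. revert h; induction n; intros h; simpl Ex. simpl; ring.
 rewrite StepAvg_plus, StepAvg_rloss.
 rewrite (StepAvg_ext _ _ (fun a b z z' => Ex (Some j) rloss n (h ++ [obsv a b z z'])) (fun a b z z' => INR n * (eps/2) + (- (eps*gam/2)) * Ex (Some j) (rind j) n (h ++ [obsv a b z z']))).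
 - rewrite StepAvg_plus, StepAvg_const, StepAvg_scal. rewrite (StepAvg_plus _ _ (rind j)). rewrite S_INR. ring.
 - intros. rewrite IHn. ring. Qed.

Definition step : Type := (nat * nat * bool * bool)%type.
Fixpoint PS (n : nat) (h : history) (Phi : list step -> R) : R :=
  match n with
  | O => Phi nil
  | S n' => SS (fun a b z z' => PS n' (h ++ [obsv a b z z']) (fun p => Phi ((a,b,z,z') :: p)))
  end.
Fixpoint pr (e : env) (h : history) (p : list step) : R :=
  match p with
  | nil => 1
  | (a,b,z,z') :: p' => w e h a b z z' * pr e (h ++ [obsv a b z z']) p'
  end.
Fixpoint Rsum (r : nat -> nat -> bool -> bool -> R) (p : list step) : R :=
  match p with
  | nil => 0
  | (a,b,z,z') :: p' => r a b z z' + Rsum r p'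
  end.

Lemma PS_le n h F G : (forall p, length p = n -> F p <= G p) -> PS n h F <= PS n h G.
Proof. revert h F G; induction n; simpl; intros h F G H. apply H; auto.
 apply SS_le; intros. apply IHn. intros p Hp. apply H. simpl; lia. Qed.
Lemma PS_ext n h F G : (forall p, length p = n -> F p = G p) -> PS n h F = PS n h G.
Proof. intros H. apply Rle_antisym; apply PS_le; intros; rewrite H; auto; lra. Qed.
Lemma PS_plus n h F G : PS n h (fun p => F p + G p) = PS n h F + PS n h G.
Proof. revert h F G; induction n; simpl; intros; auto. rewrite <- SS_plus. apply SS_ext; intros.
 apply (IHn _ (fun p => F _) (fun p => G _)). Qed.
Lemma PS_scal n h c F : PS n h (fun p => c * F p) = c * PS n h F.
Proof. revert h F; induction n; simpl; intros; auto. rewrite <- SS_scal. apply SS_ext; intros.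
 apply (IHn _ (fun p => F _)). Qed.

Lemma PS_zero n h : PS n h (fun _ => 0) = 0.
Proof. rewrite (PS_ext n h _ (fun p => 0 * 0)) by (intros; ring). rewrite (PS_scal n h 0 (fun _ => 0)). ring. Qed.
Lemma PS_nonneg n h F : (forall p, length p = n -> 0 <= F p) -> 0 <= PS n h F.
Proof. intros H. rewrite <- (PS_zero n h). apply PS_le. auto. Qed.

Lemma pr_nonneg e h p : 0 <= pr e h p.
Proof. revert h; induction p as [|[[[a b] z] z'] p IH]; simpl; intros h. lra.
 apply Rmult_le_pos; auto using w_nonneg. Qed.

Lemma PS_pr e n h : PS n h (pr e h) = 1.
Proof. revert h; induction n; simpl; intros h. auto.
 rewrite (SS_ext _ (fun a b z z' => w e h a b z z' * 1)).
 - apply (StepAvg_const e h 1).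
 - intros. rewrite (PS_scal n _ (w e h a b z z') (pr e (h ++ [obsv a b z z']))). rewrite IHn. auto. Qed.

Lemma Ex_PS e r n h : Ex e r n h = PS n h (fun p => pr e h p * Rsum r p).
Proof. revert h; induction n; simpl; intros h. ring.
 unfold StepAvg. apply SS_ext; intros.
 rewrite (PS_ext n _ _ (fun p => (w e h a b z z' * r a b z z') * pr e (h ++ [obsv a b z z']) p +
     w e h a b z z' * (pr e (h ++ [obsv a b z z']) p * Rsum r p))).
 - rewrite PS_plus, PS_scal, PS_scal, PS_pr, IHn. ring.
 - intros; simpl; ring. Qed.

Lemma quad_lemma A B C : 0 <= C -> (forall l, 0 <= A - 2*l*B + l^2*C) -> B^2 <= A*C.
Proof. intros HC H. destruct (Req_dec C 0).
 - subst. destruct (Req_dec B 0). subst; lra.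
   specialize (H ((A+1)/(2*B))). replace (A - 2*((A+1)/(2*B))*B + ((A+1)/(2*B))^2*0) with (-1) in H by (field; auto). lra.
 - specialize (H (B/C)). replace (A - 2*(B/C)*B + (B/C)^2*C) with (A - B^2/C) in H by (field; auto).
   assert (0 < C) by lra. apply Rmult_le_reg_r with (/C). apply Rinv_0_lt_compat; auto.
   replace (A*C*/C) with A by (field; lra). replace (B^2 * /C) with (B^2/C) by (unfold Rdiv; auto). lra. Qed.

Lemma PS_CS n h x y : (PS n h (fun p => x p * y p))^2 <= PS n h (fun p => x p ^2) * PS n h (fun p => y p^2).
Proof. apply quad_lemma.
 - apply PS_nonneg. intros; nra.
 - intros l. rewrite <- PS_scal, <- PS_scal.
   replace (PS n h (fun p => x p ^ 2) - PS n h (fun p => 2 * l * (x p * y p)) + PS n h (fun p => l ^ 2 * y p ^ 2))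
     with (PS n h (fun p => x p ^ 2) + PS n h (fun p => (-1) * (2 * l * (x p * y p))) + PS n h (fun p => l ^ 2 * y p ^ 2))
     by (rewrite PS_scal; ring).
   rewrite <- !PS_plus. apply PS_nonneg. intros.
   replace (x p ^ 2 + -1 * (2 * l * (x p * y p)) + l ^ 2 * y p ^ 2) with ((x p - l * y p)^2) by ring.
   apply pow2_ge_0. Qed.

Definition lam (z : bool) : R := if z then 1 - gam else 1 + gam.
Definition Lam (j a b : nat) (z z' : bool) : R :=
  if Nat.eqb a j then lam z else if Nat.eqb b j then lam z' else 1.
Definition thv (j a b : nat) (z z' : bool) : R := ln (Lam j a b z z') / 2.

Lemma lam_pos z : 0 < lam z.
Proof. unfold lam; destruct z; lra. Qed.
Lemma Lam_pos j a b z z' : 0 < Lam j a b z z'.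
Proof. unfold Lam. destruct (Nat.eqb a j); [|destruct (Nat.eqb b j)]; auto using lam_pos; lra. Qed.

Lemma w_Some j h a b z z' : w (Some j) h a b z z' = w None h a b z z' * Lam j a b z z'.
Proof. unfold w, mm, qb, Lam, lam.
 destruct (Nat.eqb_spec a b).
 - subst b. destruct (Nat.eqb a j); destruct z, z'; simpl; field.
 - destruct (Nat.eqb a j) eqn:E1; destruct (Nat.eqb b j) eqn:E2.
   + apply Nat.eqb_eq in E1; apply Nat.eqb_eq in E2. lia.
   + destruct z; simpl; field.
   + destruct z'; simpl; field.
   + field. Qed.

Lemma exp_half_ln x : 0 < x -> exp (ln x / 2) = sqrt x.
Proof. intros Hx. symmetry. apply sqrt_lem_1. lra. left; apply exp_pos.
 rewrite <- exp_plus. replace (ln x / 2 + ln x / 2) with (ln x) by field. apply exp_ln; auto. Qed.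

Fixpoint pA (j : nat) (h : history) (p : list step) : R :=
  match p with
  | nil => 1
  | (a,b,z,z') :: p' => w None h a b z z' * exp (thv j a b z z') * pA j (h ++ [obsv a b z z']) p'
  end.

Lemma pA_sqrt j h p : pA j h p = sqrt (pr (Some j) h p * pr None h p).
Proof. revert h; induction p as [|[[[a b] z] z'] p IH]; simpl; intros h.
 - rewrite Rmult_1_r, sqrt_1; auto.
 - rewrite IH, w_Some. unfold thv. rewrite exp_half_ln by apply Lam_pos.
   replace (w None h a b z z' * Lam j a b z z' * pr (Some j) (h ++ [obsv a b z z']) p *
     (w None h a b z z' * pr None (h ++ [obsv a b z z']) p)) with
     ((w None h a b z z' * w None h a b z z') * (Lam j a b z z' * (pr (Some j) (h ++ [obsv a b z z']) p * pr None (h ++ [obsv a b z z']) p))) by ring.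
   pose proof (w_nonneg None h a b z z'). pose proof (Lam_pos j a b z z').
   pose proof (pr_nonneg (Some j) (h ++ [obsv a b z z']) p). pose proof (pr_nonneg None (h ++ [obsv a b z z']) p).
   rewrite (sqrt_mult _ _ (Rmult_le_pos _ _ H H) (Rmult_le_pos _ _ (Rlt_le _ _ H0) (Rmult_le_pos _ _ H1 H2))).
   rewrite sqrt_square by auto.
   rewrite (sqrt_mult _ _ (Rlt_le _ _ H0) (Rmult_le_pos _ _ H1 H2)). ring. Qed.

Lemma StepAvg_jensen e h X : exp (StepAvg e h X) <= StepAvg e h (fun a b z z' => exp (X a b z z')).
Proof. set (m := StepAvg e h X).
 apply Rle_trans with (StepAvg e h (fun a b z z' => exp m * 1 + exp m * X a b z z' + (- (exp m * m)))).
 - rewrite !StepAvg_plus, !StepAvg_const, StepAvg_scal. fold m. lra.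
 - apply StepAvg_le. intros. replace (X a b z z') with (m + (X a b z z' - m)) at 2 by ring.
   rewrite exp_plus. pose proof (exp_ineq1_le (X a b z z' - m)). pose proof (exp_pos m). nra. Qed.

Definition robs (j a b : nat) (z z' : bool) : R := if Nat.eqb a j then 1 else if Nat.eqb b j then 1 else 0.
Definition kap : R := (ln (1 - gam) + ln (1 + gam)) / 4.

Lemma StepAvg_thv j h : StepAvg None h (thv j) = kap * StepAvg None h (robs j).
Proof.
 rewrite (StepAvg_ext None h (thv j) (fun a b z z' => (if Nat.eqb a j then ln (lam z) / 2 else 0)
     + (if Nat.eqb a j then 0 else if Nat.eqb b j then ln (lam z') / 2 else 0))).
 2:{ intros. unfold thv, Lam. destruct (Nat.eqb a j); [ring|]. destruct (Nat.eqb b j); [ring|]. rewrite ln_1. field. }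
 rewrite (StepAvg_ext None h (robs j) (fun a b z z' => (if Nat.eqb a j then 1 else 0)
     + (if Nat.eqb a j then 0 else if Nat.eqb b j then 1 else 0))).
 2:{ intros. unfold robs. destruct (Nat.eqb a j); [ring|]. destruct (Nat.eqb b j); ring. }
 rewrite !StepAvg_plus. rewrite Rmult_plus_distr_l. f_equal.
 - rewrite (StepAvg_az None h (fun a z => if Nat.eqb a j then ln (lam z) / 2 else 0)).
   rewrite (StepAvg_az None h (fun a z => if Nat.eqb a j then 1 else 0)).
   rewrite <- sumR_scal. apply sumR_ext; intros a Ha. unfold bsum, qb, kap, lam.
   destruct (Nat.eqb a j); field.
 - unfold StepAvg, SS. rewrite <- sumR_scal. apply sumR_ext; intros a Ha.
   rewrite <- sumR_scal. apply sumR_ext; intros b Hb. rewrite <- bsum_scal. apply bsum_ext; intros z.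
   unfold bsum, w, mm, qb, kap, lam.
   destruct (Nat.eqb a j) eqn:E1. ring.
   destruct (Nat.eqb b j) eqn:E2; [|ring].
   destruct (Nat.eqb_spec a b).
   + subst. rewrite E1 in E2; discriminate.
   + field. Qed.

Lemma Ex_nonneg e r n h : (forall a b z z', 0 <= r a b z z') -> 0 <= Ex e r n h.
Proof. intros Hr. revert h; induction n; simpl; intros h. lra.
 rewrite <- (StepAvg_const e h 0). apply StepAvg_le. intros. pose proof (Hr a b z z'). pose proof (IHn (h ++ [obsv a b z z'])). lra. Qed.

Lemma rho_bound j n h : exp (kap * Ex None (robs j) n h) <= PS n h (pA j h).
Proof. revert h; induction n; intros h; simpl Ex; simpl PS.
 - rewrite Rmult_0_r, exp_0. simpl. lra.
 - rewrite (SS_ext _ (fun a b z z' => w None h a b z z' * (exp (thv j a b z z') * PS n (h ++ [obsv a b z z']) (pA j (h ++ [obsv a b z z']))))).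
   2:{ intros. simpl pA. rewrite <- (PS_scal n _ (exp (thv j a b z z'))), <- PS_scal. apply PS_ext. intros. ring. }
   fold (StepAvg None h (fun a b z z' => exp (thv j a b z z') * PS n (h ++ [obsv a b z z']) (pA j (h ++ [obsv a b z z'])))).
   apply Rle_trans with (StepAvg None h (fun a b z z' => exp (thv j a b z z' + kap * Ex None (robs j) n (h ++ [obsv a b z z'])))).
   2:{ apply StepAvg_le. intros. rewrite exp_plus. apply Rmult_le_compat_l. left; apply exp_pos. apply IHn. }
   eapply Rle_trans. 2: apply StepAvg_jensen.
   rewrite (StepAvg_plus None h (thv j) (fun a b z z' => kap * Ex None (robs j) n (h ++ [obsv a b z z']))).
   rewrite StepAvg_thv, StepAvg_scal, StepAvg_plus. right. f_equal. ring. Qed.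

Lemma Rsum_rind_bounds j p : 0 <= Rsum (rind j) p <= INR (length p).
Proof. induction p as [|[[[a b] z] z'] p IH]; cbn [Rsum length]. simpl; lra.
 rewrite S_INR. change (rind j a b z z') with (if Nat.eqb a j then 1 else 0). destruct (Nat.eqb a j); lra. Qed.

Lemma kap_lb : gam^2 <= 1/2 -> - (gam^2/2) <= kap.
Proof. intros Hg. unfold kap. rewrite <- ln_mult by lra.
 replace ((1-gam)*(1+gam)) with (1 - gam^2) by ring. set (x := gam^2) in *.
 assert (0 <= x) by (unfold x; apply pow2_ge_0).
 assert (-2*x <= ln (1-x)).
 { destruct (Rle_or_lt (-2*x) (ln (1-x))) as [H1|H1]; auto.
   apply exp_increasing in H1. rewrite exp_ln in H1 by lra.
   pose proof (exp_ineq1_le (2*x)). assert (exp (-2*x) * exp (2*x) = 1).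
   { rewrite <- exp_plus. replace (-2*x + 2*x) with 0 by ring. apply exp_0. }
   pose proof (exp_pos (-2*x)). nra. }
 lra. Qed.

Lemma info_bound j n h : gam^2 <= 1/2 ->
  Ex (Some j) (rind j) n h <= Ex None (rind j) n h + INR n * gam * sqrt (Ex None (robs j) n h).
Proof. intros Hg.
 set (O := Ex None (robs j) n h).
 assert (HO: 0 <= O). { apply Ex_nonneg. intros; unfold robs. destruct (Nat.eqb a j); [lra|]. destruct (Nat.eqb b j); lra. }
 set (rho := PS n h (pA j h)).
 set (s1 := fun p => sqrt (pr (Some j) h p)). set (s2 := fun p => sqrt (pr None h p)).
 assert (E1: forall p, s1 p * s1 p = pr (Some j) h p) by (intros; apply sqrt_sqrt, pr_nonneg).
 assert (E2: forall p, s2 p * s2 p = pr None h p) by (intros; apply sqrt_sqrt, pr_nonneg).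
 assert (E3: forall p, s1 p * s2 p = pA j h p).
 { intros. rewrite pA_sqrt. unfold s1, s2. rewrite sqrt_mult; auto using pr_nonneg. }
 set (nn := INR n).
 set (f := Rsum (rind j)).
 set (x := fun p => s1 p - s2 p). set (y := fun p => (s1 p + s2 p) * (f p - nn/2)).
 assert (HA: PS n h (fun p => x p ^2) = 2 - 2 * rho).
 { rewrite (PS_ext n h _ (fun p => pr (Some j) h p + pr None h p + (-2) * pA j h p)).
   - rewrite !PS_plus, PS_scal, !PS_pr. unfold rho. ring.
   - intros. unfold x. rewrite <- E1, <- E2, <- E3. ring. }
 assert (HB: PS n h (fun p => x p * y p) = Ex (Some j) (rind j) n h - Ex None (rind j) n h).
 { rewrite !Ex_PS. rewrite (PS_ext n h _ (fun p => pr (Some j) h p * f p + (-1) * (pr None h p * f p) +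
      (- (nn/2)) * pr (Some j) h p + (nn/2) * pr None h p)).
   - rewrite !PS_plus, !PS_scal, !PS_pr. unfold f. ring.
   - intros. unfold x, y. rewrite <- E1, <- E2. ring. }
 assert (HC: PS n h (fun p => y p ^2) <= (nn/2)^2 * (2 + 2 * rho)).
 { apply Rle_trans with (PS n h (fun p => (nn/2)^2 * (pr (Some j) h p + pr None h p + 2 * pA j h p))).
   - apply PS_le. intros p Hp. unfold y. rewrite <- E1, <- E2, <- E3.
     pose proof (Rsum_rind_bounds j p). fold f in H. rewrite Hp in H. fold nn in H.
     assert ((f p - nn/2)^2 <= (nn/2)^2) by nra.
     assert (0 <= (s1 p + s2 p)^2) by apply pow2_ge_0.
     replace ((s1 p + s2 p) * (f p - nn / 2)) with ((s1 p + s2 p) * (f p - nn / 2)) by auto.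
     replace (((s1 p + s2 p) * (f p - nn / 2)) ^ 2) with ((s1 p + s2 p)^2 * (f p - nn/2)^2) by ring.
     replace ((nn / 2) ^ 2 * (s1 p * s1 p + s2 p * s2 p + 2 * (s1 p * s2 p))) with ((s1 p + s2 p)^2 * (nn/2)^2) by ring.
     apply Rmult_le_compat_l; auto.
   - rewrite PS_scal, !PS_plus, PS_scal, !PS_pr. unfold rho. right; ring. }
 pose proof (PS_CS n h x y) as HCS. rewrite HA, HB in HCS.
 assert (HA0: 0 <= 2 - 2*rho) by (rewrite <- HA; apply PS_nonneg; intros; apply pow2_ge_0).
 pose proof (rho_bound j n h) as Hr. fold O rho in Hr.
 pose proof (exp_ineq1_le (kap * O)).
 pose proof (kap_lb Hg).
 assert (Hnn: 0 <= nn) by (unfold nn; apply pos_INR).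
 assert (0 <= rho). { unfold rho. rewrite (PS_ext n h _ (fun p => s1 p * s2 p)) by (intros; auto).
   apply PS_nonneg. intros. unfold s1, s2. apply Rmult_le_pos; apply sqrt_pos. }
 set (D := Ex (Some j) (rind j) n h - Ex None (rind j) n h) in *.
 assert (D^2 <= (nn * gam * sqrt O)^2).
 { replace ((nn * gam * sqrt O)^2) with (nn^2 * gam^2 * O).
   2:{ replace ((nn * gam * sqrt O)^2) with (nn^2 * gam^2 * (sqrt O * sqrt O)) by ring. rewrite sqrt_sqrt; auto. }
   apply Rle_trans with ((2 - 2*rho) * ((nn/2)^2 * (2 + 2*rho))).
   - apply Rle_trans with ((2 - 2 * rho) * PS n h (fun p => y p ^ 2)); auto.
     apply Rmult_le_compat_l; auto.
   - assert (1 - rho <= - kap * O) by lra.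
     assert (- kap * O <= gam^2/2 * O) by nra.
     assert (0 <= nn^2) by nra.
     replace ((2 - 2 * rho) * ((nn / 2) ^ 2 * (2 + 2 * rho))) with (nn^2 * ((1 - rho) * (1 + rho))) by field.
     assert ((1 - rho) * (1 + rho) <= 2 * (1 - rho)) by nra.
     nra. }
 assert (0 <= nn * gam * sqrt O). { apply Rmult_le_pos; [apply Rmult_le_pos; lra|apply sqrt_pos]. }
 unfold D in *. nra. Qed.

Lemma StepAvg_sum e h m F : StepAvg e h (fun a b z z' => sumR m (fun i => F i a b z z')) = sumR m (fun i => StepAvg e h (F i)).
Proof. induction m; simpl. apply StepAvg_const. rewrite StepAvg_plus, IHm. auto. Qed.

Lemma Ex_sum e m r n h : Ex e (fun a b z z' => sumR m (fun i => r i a b z z')) n h = sumR m (fun i => Ex e (r i) n h).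
Proof. revert h; induction n; simpl; intros h. rewrite sumR_const; ring.
 rewrite (StepAvg_ext e h _ (fun a b z z' => sumR m (fun i => r i a b z z' + Ex e (r i) n (h ++ [obsv a b z z'])))).
 - rewrite StepAvg_sum. auto.
 - intros. rewrite IHn, sumR_plus. auto. Qed.

Lemma Ex_le e r r' n h : (forall a b z z', (a < K)%nat -> (b < K)%nat -> r a b z z' <= r' a b z z') -> Ex e r n h <= Ex e r' n h.
Proof. intros H. revert h; induction n; simpl; intros h. lra.
 apply StepAvg_le. intros. pose proof (H a b z z' H0 H1). pose proof (IHn (h ++ [obsv a b z z'])). lra. Qed.

Lemma Ex_const e r c n h : (forall a b z z', (a < K)%nat -> (b < K)%nat -> r a b z z' = c) -> Ex e r n h = INR n * c.
Proof. intros H. revert h; induction n; intros h. simpl; ring. rewrite S_INR. simpl Ex.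
 rewrite (StepAvg_ext e h _ (fun _ _ _ _ => c + INR n * c)). rewrite StepAvg_const. ring.
 intros. rewrite H, IHn; auto. Qed.

Lemma sum_G0 n h : sumR K (fun j => Ex None (rind j) n h) = INR n.
Proof. rewrite <- Ex_sum. rewrite (Ex_const _ _ 1). ring.
 intros. unfold rind. rewrite (sumR_ext _ _ (fun i => if Nat.eqb i a then 1 else 0)). apply sumR_indic; auto.
 intros. rewrite Nat.eqb_sym. auto. Qed.

Lemma sum_O n h : sumR K (fun j => Ex None (robs j) n h) <= 2 * INR n.
Proof. rewrite <- Ex_sum. replace (2 * INR n) with (Ex None (fun _ _ _ _ => 2) n h) by (rewrite (Ex_const _ _ 2) by auto; ring).
 apply Ex_le. intros.
 apply Rle_trans with (sumR K (fun i => (if Nat.eqb i a then 1 else 0) + (if Nat.eqb i b then 1 else 0))).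
 - apply sumR_le. intros. unfold robs. rewrite (Nat.eqb_sym a i), (Nat.eqb_sym b i).
   destruct (Nat.eqb i a); destruct (Nat.eqb i b); lra.
 - rewrite sumR_plus, !sumR_indic; auto. lra. Qed.

Lemma sum_Gj n : gam^2 <= 1/2 ->
  sumR K (fun j => Ex (Some j) (rind j) n []) <= INR n + INR n * gam * sqrt (2 * INR K * INR n).
Proof. intros Hg.
 apply Rle_trans with (sumR K (fun j => Ex None (rind j) n [] + INR n * gam * sqrt (Ex None (robs j) n []))).
 - apply sumR_le. intros. apply info_bound; auto.
 - rewrite sumR_plus, sum_G0, sumR_scal. apply Rplus_le_compat_l.
   assert (0 <= INR n * gam) by (apply Rmult_le_pos; [apply pos_INR|lra]).
   apply Rmult_le_compat_l; auto.
   set (S0 := sumR K (fun i => sqrt (Ex None (robs i) n []))).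
   assert (HS0: 0 <= S0) by (apply sumR_nonneg; intros; apply sqrt_pos).
   pose proof (sumR_CS K (fun i => sqrt (Ex None (robs i) n []))) as HC. fold S0 in HC.
   rewrite (sumR_ext _ _ (fun i => Ex None (robs i) n [])) in HC.
   2:{ intros. simpl. rewrite Rmult_1_r. apply sqrt_sqrt. apply Ex_nonneg. intros; unfold robs.
       destruct (Nat.eqb a i); [lra|]; destruct (Nat.eqb b i); lra. }
   pose proof (sum_O n []).
   assert (S0^2 <= 2 * INR K * INR n).
   { eapply Rle_trans; [apply HC|]. pose proof (pos_INR K). nra. }
   rewrite <- (sqrt_pow2 S0) by auto. apply sqrt_le_1_alt. lra. Qed.

Lemma AvgL_regret j T L : (j < K)%nat -> Good L ->
  (eps*gam/2) * (INR T - Ex (Some j) (rind j) T []) <= AvgL (Some j) T 0 (regret K T alg) L.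
Proof. intros Hj HL.
 apply Rle_trans with (AvgL (Some j) T 0 (fun L => exp_loss K T alg L + (-1) * cum_loss T L j) L).
 - rewrite AvgL_plus, AvgL_scal. unfold exp_loss. rewrite AvgL_exp_loss, Ex_loss.
   unfold cum_loss. rewrite AvgL_sum. rewrite (sumR_ext _ _ (fun _ => qb (Some j) j true * eps)).
   + rewrite sumR_const. unfold qb. rewrite Nat.eqb_refl. right. field.
   + intros. apply AvgL_cum; lia.
 - apply AvgL_le; auto. intros. unfold regret. pose proof (minR_le (K-1) (cum_loss T L') j ltac:(lia)). lra. Qed.

Lemma bsum_max (X : bool -> R) e a : exists z, bsum (fun z => qb e a z * X z) <= X z.
Proof. destruct (Rle_or_lt (X true) (X false)).
 - exists false. unfold bsum. pose proof (qb_sum e a). pose proof (qb_nonneg e a true). pose proof (qb_nonneg e a false). nra.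
 - exists true. unfold bsum. pose proof (qb_sum e a). pose proof (qb_nonneg e a true). pose proof (qb_nonneg e a false). nra. Qed.

Lemma RowAvg_max e k G : exists r, RowAvg e k G <= G r.
Proof. revert G; induction k; simpl; intros G. exists (fun _ => false); lra.
 destruct (bsum_max (fun z => RowAvg e k (fun r => G (upd r k z))) e k) as [z Hz].
 destruct (IHk (fun r => G (upd r k z))) as [r Hr]. exists (upd r k z). lra. Qed.

Lemma AvgL_max e n t F L : Good L -> exists L', Good L' /\ AvgL e n t F L <= F L'.
Proof. revert t L; induction n; simpl; intros t L HL. exists L; split; auto; lra.
 destruct (RowAvg_max e K (fun r => AvgL e n (S t) F (setrow L t r))) as [r Hr].
 destruct (IHn (S t) (setrow L t r)) as [L' [HL' HF]].
 - intros s a. unfold setrow. destruct (Nat.eqb s t); auto. unfold val; destruct (r a); auto.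
 - exists L'. split; auto. lra. Qed.

Lemma sumR_lt_all n f B : (1 <= n)%nat -> (forall i, (i < n)%nat -> f i < B) -> sumR n f < INR n * B.
Proof. induction n; intros Hn H. lia. rewrite S_INR. cbn [sumR]. destruct n.
 - simpl. pose proof (H 0%nat ltac:(lia)). lra.
 - pose proof (IHn ltac:(lia) ltac:(intros; apply H; lia)). pose proof (H (S n) ltac:(lia)). lra. Qed.

Lemma sumR_exists_ge n f B : (1 <= n)%nat -> INR n * B <= sumR n f -> exists i, (i < n)%nat /\ B <= f i.
Proof. intros Hn H. destruct (Classical_Prop.classic (exists i, (i < n)%nat /\ B <= f i)) as [H1|H1]; auto.
 exfalso. assert (forall i, (i < n)%nat -> f i < B).
 { intros i Hi. destruct (Rle_or_lt B (f i)); auto. exfalso; apply H1; eauto. }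
 pose proof (sumR_lt_all n f B Hn H0). lra. Qed.

Lemma main_section T : (1 <= K)%nat -> gam^2 <= 1/2 ->
  exists L, Good L /\ (eps*gam/2) * (INR K * INR T - (INR T + INR T * gam * sqrt (2 * INR K * INR T))) / INR K <= regret K T alg L.
Proof. intros HK Hg.
 set (L0 := fun (_ _ : nat) => 0).
 assert (HL0: Good L0) by (intros s a; left; auto).
 assert (Hsum: INR K * ((eps*gam/2) * (INR K * INR T - (INR T + INR T * gam * sqrt (2 * INR K * INR T))) / INR K)
     <= sumR K (fun j => AvgL (Some j) T 0 (regret K T alg) L0)).
 { apply Rle_trans with (sumR K (fun j => (eps*gam/2) * (INR T - Ex (Some j) (rind j) T []))).
   - rewrite (sumR_ext _ _ (fun j => (eps*gam/2) * INR T + (- (eps*gam/2)) * Ex (Some j) (rind j) T [])) by (intros; ring).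
     rewrite sumR_plus, sumR_const, sumR_scal. pose proof (sum_Gj T Hg).
     assert (0 < INR K) by (apply lt_0_INR; lia).
     assert (0 <= eps*gam/2) by (apply Rmult_le_pos; [apply Rmult_le_pos|]; lra).
     replace (INR K * ((eps*gam/2) * (INR K * INR T - (INR T + INR T * gam * sqrt (2 * INR K * INR T))) / INR K))
       with ((eps*gam/2) * (INR K * INR T - (INR T + INR T * gam * sqrt (2 * INR K * INR T)))) by (field; lra).
     nra.
   - apply sumR_le. intros. apply AvgL_regret; auto. }
 destruct (sumR_exists_ge _ _ _ HK Hsum) as [j [Hj HB]].
 destruct (AvgL_max (Some j) T 0 (regret K T alg) L0 HL0) as [L [HL HR]].
 exists L. split; auto. lra. Qed.

End Main.

Theorem theorem2 (K T : nat) (eps : R) :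
  (2 <= K)%nat -> 0 < eps <= 1 -> 3 * INR K / 32 <= INR T ->
  forall alg : algorithm, valid_algorithm K alg ->
  exists L : nat -> nat -> R,
    losses_in_01 K T L /\ eff_range_le K T L eps /\
    regret K T alg L >= 2 / 100 * eps * sqrt (INR K * INR T).
Proof.
  intros HK Heps HT alg Hval.
  set (k := INR K) in *. set (t := INR T) in *.
  assert (Hk: 2 <= k). { unfold k. replace 2 with (INR 2) by (simpl; lra). apply le_INR; auto. }
  assert (Ht: 0 < t) by lra.
  set (S0 := sqrt (k * t)).
  assert (HS: S0 * S0 = k * t) by (apply sqrt_sqrt; nra).
  assert (HS0: 0 < S0) by (apply sqrt_lt_R0; nra).
  set (gam := S0 / (6 * t)).
  assert (Hg0: 0 <= gam) by (unfold gam; apply Rmult_le_pos; [lra|]; left; apply Rinv_0_lt_compat; lra).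
  assert (Hg2: gam ^ 2 = k / (36 * t)).
  { unfold gam. replace ((S0 / (6*t))^2) with ((S0*S0)/(36*t*t)) by (field; lra). rewrite HS. field; lra. }
  assert (Hg2': gam^2 <= 1/2).
  { rewrite Hg2. apply Rmult_le_reg_r with (36 * t). lra. replace (k / (36*t) * (36*t)) with k by (field; lra). lra. }
  assert (Hg1: gam < 1) by nra.
  destruct (main_section K alg eps gam Hval ltac:(lra) ltac:(lra) T ltac:(lia) Hg2') as [L [HL HR]].
  exists L. split; [|split].
  - intros s a _ _. destruct (HL s a) as [E|E]; rewrite E; lra.
  - intros s a a' _ _ _. destruct (HL s a) as [E|E]; destruct (HL s a') as [E'|E']; rewrite E, E';
      unfold Rabs; destruct (Rcase_abs _); lra.
  - fold k t in HR. apply Rle_ge. eapply Rle_trans; [|apply HR].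
    assert (Hsq2: sqrt 2 <= 1.415).
    { rewrite <- (sqrt_square 1.415) by lra. apply sqrt_le_1_alt. lra. }
    assert (Hsq2': 0 <= sqrt 2) by apply sqrt_pos.
    assert (E1: sqrt (2 * k * t) = sqrt 2 * S0).
    { unfold S0. rewrite <- sqrt_mult by nra. f_equal. ring. }
    rewrite E1.
    replace (t * gam * (sqrt 2 * S0)) with (sqrt 2 * (S0 * S0) / 6) by (unfold gam; field; lra).
    rewrite HS.
    replace (eps * gam / 2 * (k * t - (t + sqrt 2 * (k * t) / 6)) / k)
      with (eps * S0 * ((k - 1 - sqrt 2 * k / 6) / (12 * k))) by (unfold gam; field; lra).
    fold S0.
    replace (2 / 100 * eps * S0) with (eps * S0 * (2/100)) by ring.
    apply Rmult_le_compat_l. nra.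
    apply Rmult_le_reg_r with (12 * k). lra.
    replace ((k - 1 - sqrt 2 * k / 6) / (12 * k) * (12 * k)) with (k - 1 - sqrt 2 * k / 6) by (field; lra).
    nra.
Qed.
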